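(* The linear map $F(L)\to F(A)$ sending the class of $a\otimes b$ ($a,b\in L$) to $\operatorname{tr}(ab)$ is injective.
   Context: $A=\mathbb{R}\langle x,y\rangle$ is the free associative algebra and $L\subset A$ the free Lie algebra on $x,y$ (smallest Lie subalgebra of $(A,[a,b]=ab-ba)$ containing $x,y$). $F(A)$ is the quotient of $A\otimes A$ by the span of $a\otimes b-b\otimes a$ and $a\otimes bc-ab\otimes c$, identified with $A/\operatorname{span}\{ab-ba\}$ via $a\otimes b\mapsto \operatorname{tr}(ab)$, where $\operatorname{tr}$ denotes the projection $A\to A/\operatorname{span}\{ab-ba\}$. $F(L)$ is the quotient of $L\otimes L$ by the span of $a\otimes b-b\otimes a$ and $a\otimes[b,c]-[a,b]\otimes c$ ($a,b,c\in L$). *)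

(* Defs.v *)
From HB Require Import structures.
From mathcomp Require Import all_boot all_order all_algebra.
From mathcomp Require Import reals.
Set Implicit Arguments. Unset Strict Implicit. Unset Printing Implicit Defensive.
Import Order.TTheory GRing.Theory Num.Theory.
Local Open Scope ring_scope.

(* Words in the two letters x (= false) and y (= true). *)
Definition word := seq bool.

Section FreeAlg.
Variable R : realType.

(* Elements of R<x,y> (and of R<<x,y>>) are coefficient functions on words;
   the free algebra A is the subspace of finitely supported ones. *)
Definition fin_supp (f : word -> R) : Prop :=
  exists s : seq word, forall w, w \notin s -> f w = 0.

Definition letter (b : bool) : word -> R :=
  fun w => if w == [:: b] then 1 else 0.
Definition X : word -> R := letter false.
Definition Y : word -> R := letter true.

(* concatenation (convolution) product *)
Definition amul (f g : word -> R) : word -> R :=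
  fun w => \sum_(i < (size w).+1) f (take i w) * g (drop i w).

Definition aadd (f g : word -> R) : word -> R := fun w => f w + g w.
Definition asub (f g : word -> R) : word -> R := fun w => f w - g w.
Definition ascale (c : R) (f : word -> R) : word -> R := fun w => c * f w.
Definition azero : word -> R := fun _ => 0.

Definition bracket (f g : word -> R) : word -> R := asub (amul f g) (amul g f).

Definition lie_closed (S : (word -> R) -> Prop) : Prop :=
  [/\ S azero,
      (forall f g, S f -> S g -> S (aadd f g)),
      (forall c f, S f -> S (ascale c f)) &
      (forall f g, S f -> S g -> S (bracket f g))].

(* The free Lie algebra L: smallest Lie subalgebra containing x and y. *)
Definition inL (f : word -> R) : Prop :=
  forall S : (word -> R) -> Prop, lie_closed S -> S X -> S Y -> S f.

Definition lspan (T : Type) (P : (T -> R) -> Prop) (v : T -> R) : Prop :=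
  exists (m : nat) (c : nat -> R) (g : nat -> T -> R),
    (forall i, (i < m)%N -> P (g i)) /\
    (forall t, v t = \sum_(i < m) c i * g i t).

(* span{ab - ba : a, b in A}, the kernel of tr : A -> A/[A,A] *)
Definition comm_gen (f : word -> R) : Prop :=
  exists a b, fin_supp a /\ fin_supp b /\ f = asub (amul a b) (amul b a).

(* A ⊗ A realized as (finitely supported) functions on pairs of words *)
Definition tens (a b : word -> R) : word * word -> R := fun p => a p.1 * b p.2.

(* relations defining F(L) as a quotient of L ⊗ L *)
Definition FL_rel (t : word * word -> R) : Prop :=
  (exists a b, inL a /\ inL b /\
     t = (fun p => tens a b p - tens b a p)) \/
  (exists a b c, inL a /\ inL b /\ inL c /\
     t = (fun p => tens a (bracket b c) p - tens (bracket a b) c p)).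

End FreeAlg.

(* Main.v *)
Require Import Defs.
From HB Require Import structures.
From mathcomp Require Import all_boot all_order all_algebra.
From mathcomp Require Import reals.
From mathcomp Require Import boolp classical_sets functions.
From mathcomp Require Import ring.
Import Order.TTheory GRing.Theory Num.Theory.
Local Open Scope ring_scope.
Set Implicit Arguments. Unset Strict Implicit. Unset Printing Implicit Defensive.
Section S.
Variable R : realType.
Implicit Types f g h : word -> R.
Lemma tri_exch n (F : nat -> nat -> R) :
  \sum_(0 <= i < n.+1) \sum_(0 <= j < n - i + 1) F i (j + i) =
  \sum_(0 <= k < n.+1) \sum_(0 <= i < k.+1) F i k.
Proof.
have L1 : forall i, (i < n.+1)%N -> \sum_(0 <= j < n - i + 1) F i (j + i) =
    \sum_(0 <= k < n.+1 | (i <= k)%N) F i k.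
  move=> i lin.
  have -> : (n - i + 1 = n.+1 - i)%N by rewrite addn1 subSn.
  have := big_addn 0 n.+1 i xpredT (F i); rewrite add0n => <-.
  rewrite [RHS](big_cat_nat (leq0n i) (ltnW lin)) /=.
  rewrite [X in _ = X + _]big_nat_cond [X in _ = X + _]big_pred0; last by move=> k; case: (leqP i k) => h; rewrite ?andbF // andbT ltnNge h.
  rewrite add0r [in RHS]big_nat_cond [in LHS]big_nat_cond; apply: eq_bigl => k.
  by case/boolP: (i <= k)%N; rewrite ?andbF ?andbT.
rewrite big_nat_cond (eq_bigr (fun i => \sum_(0 <= k < n.+1 | (i <= k)%N) F i k)); last first.
  by move=> i /andP[/andP[_ h] _]; rewrite L1.
rewrite -big_nat_cond.
rewrite (exchange_big_dep_nat (fun _ => true)) //=.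
apply: eq_big_nat => k /andP[_ kn].
rewrite (@big_nat_widen _ _ _ 0 k.+1 n.+1) //.
Qed.
Lemma sumfE (T I : Type) (r : seq I) (P : pred I) (F : I -> T -> R) x :
  (\sum_(i <- r | P i) F i) x = \sum_(i <- r | P i) F i x.
Proof. by rewrite fct_sumE. Qed.

Lemma addfE (T : Type) (f g : T -> R) x : (f + g) x = f x + g x. Proof. by []. Qed.
Lemma oppfE (T : Type) (f : T -> R) x : (- f) x = - f x. Proof. by []. Qed.
Lemma subfE (T : Type) (f g : T -> R) x : (f - g) x = f x - g x. Proof. by []. Qed.
Lemma zerofE (T : Type) x : (0 : T -> R) x = 0. Proof. by []. Qed.
Definition fE := (addfE, oppfE, zerofE, sumfE).

Definition sc {T : Type} (c : R) (f : T -> R) : T -> R := fun x => c * f x.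

Lemma amulA f g h : amul f (amul g h) = amul (amul f g) h.
Proof.
apply/funext => w; rewrite /amul.
set n := size w.
pose F := fun i k => f (take i w) * g (drop i (take k w)) * h (drop k w).
transitivity (\sum_(0 <= i < n.+1) \sum_(0 <= j < n - i + 1) F i (j + i)).
  rewrite big_mkord; apply: eq_bigr => i _.
  rewrite big_distrr /= size_drop -/n big_mkord addn1.
  apply: eq_bigr => j _; rewrite /F mulrA take_drop drop_drop //.
rewrite (tri_exch n F) big_mkord; apply: eq_bigr => k _.
have kn : (k <= n)%N by rewrite -ltnS.
rewrite big_distrl /= size_takel // big_mkord; apply: eq_bigr => i _.
by rewrite /F take_takel // -ltnS.
Qed.

Lemma amulDl f g h : amul (f + g) h = amul f h + amul g h.
Proof. by apply/funext => w; rewrite !fE /amul -big_split; apply: eq_bigr => i _; rewrite !fE mulrDl. Qed.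
Lemma amulDr f g h : amul f (g + h) = amul f g + amul f h.
Proof. by apply/funext => w; rewrite !fE /amul -big_split; apply: eq_bigr => i _; rewrite !fE mulrDr. Qed.
Lemma amulZl c f g : amul (sc c f) g = sc c (amul f g).
Proof. by apply/funext => w; rewrite /amul /sc big_distrr; apply: eq_bigr => i _; rewrite /= mulrA. Qed.
Lemma amulZr c f g : amul f (sc c g) = sc c (amul f g).
Proof. by apply/funext => w; rewrite /amul /sc big_distrr; apply: eq_bigr => i _; rewrite /= mulrCA. Qed.
Lemma amul0l g : amul 0 g = 0.
Proof. by apply/funext => w; rewrite !fE /amul big1 // => i _; rewrite !fE mul0r. Qed.
Lemma amul0r g : amul g 0 = 0.
Proof. by apply/funext => w; rewrite !fE /amul big1 // => i _; rewrite !fE mulr0. Qed.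
Lemma amulNl f g : amul (- f) g = - amul f g.
Proof. by apply/funext => w; rewrite !fE /amul -sumrN; apply: eq_bigr => i _; rewrite !fE mulNr. Qed.
Lemma amulNr f g : amul f (- g) = - amul f g.
Proof. by apply/funext => w; rewrite !fE /amul -sumrN; apply: eq_bigr => i _; rewrite !fE mulrN. Qed.
Lemma amulBl f g h : amul (f - g) h = amul f h - amul g h.
Proof. by rewrite amulDl amulNl. Qed.
Lemma amulBr f g h : amul h (f - g) = amul h f - amul h g.
Proof. by rewrite amulDr amulNr. Qed.

Ltac pw := let x := fresh "x" in apply/funext => x; rewrite /sc ?fE /=.

Definition islin {T1 T2 : Type} (h : (T1 -> R) -> (T2 -> R)) :=
  forall c (u v : T1 -> R), h (sc c u + v) = sc c (h u) + h v.

Section Lin.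
Context {T1 T2 : Type} (h : (T1 -> R) -> (T2 -> R)) (hl : islin h).
Lemma lin0 : h 0 = 0.
Proof.
have e : sc 1 (0 : T1 -> R) + 0 = 0 by pw; rewrite mulr0 addr0.
have := hl 1 0 0; rewrite e => e2.
have : h 0 + h 0 = h 0 + 0.
  by rewrite addr0 [in RHS]e2; congr (_ + _); pw; rewrite mul1r.
by move/addrI.
Qed.
Lemma linD (f g : T1 -> R) : h (f + g) = h f + h g.
Proof.
have e : f = sc 1 f by pw; rewrite mul1r.
by rewrite [in LHS]e hl; congr (_ + _); pw; rewrite mul1r.
Qed.
Lemma linZ c (f : T1 -> R) : h (sc c f) = sc c (h f).
Proof.
have e : sc c f = sc c f + 0 by rewrite addr0.
by rewrite e hl lin0 !addr0.
Qed.
Lemma linN (f : T1 -> R) : h (- f) = - h f.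
Proof.
have e : - f = sc (-1) f by pw; rewrite mulN1r.
by rewrite e linZ; pw; rewrite mulN1r.
Qed.
Lemma linB (f g : T1 -> R) : h (f - g) = h f - h g.
Proof. by rewrite linD linN. Qed.
Lemma lin_sum (I : Type) (r : seq I) (P : pred I) (F : I -> T1 -> R) :
  h (\sum_(i <- r | P i) F i) = \sum_(i <- r | P i) h (F i).
Proof. by apply: (big_morph h linD lin0). Qed.
End Lin.

Lemma sc_islin (T : Type) c : islin (@sc T c).
Proof. by move=> d f g; pw; ring. Qed.
Lemma scA (T : Type) c d (f : T -> R) : sc c (sc d f) = sc (c * d) f.
Proof. by pw; rewrite mulrA. Qed.
Lemma sc1 (T : Type) (f : T -> R) : sc 1 f = f.
Proof. by pw; rewrite mul1r. Qed.
Lemma scN1 (T : Type) (f : T -> R) : sc (-1) f = - f.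
Proof. by pw; rewrite mulN1r. Qed.
Lemma scNl (T : Type) c (f : T -> R) : sc (- c) f = - sc c f.
Proof. by pw; rewrite mulNr. Qed.
Lemma scDl (T : Type) c d (f : T -> R) : sc (c + d) f = sc c f + sc d f.
Proof. by pw; rewrite mulrDl. Qed.
Lemma sc0 (T : Type) (f : T -> R) : sc 0 f = 0.
Proof. by pw; rewrite mul0r. Qed.
Lemma sc_sumr (T I : Type) (r : seq I) (F : I -> R) (f : T -> R) :
  sc (\sum_(i <- r) F i) f = \sum_(i <- r) sc (F i) f.
Proof. by pw; rewrite big_distrl. Qed.

Lemma amul_islinl g : islin (fun f => amul f g).
Proof. by move=> c f f'; rewrite amulDl amulZl. Qed.
Lemma amul_islinr f : islin (amul f).
Proof. by move=> c g g'; rewrite amulDr amulZr. Qed.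

Lemma bracketE f g : bracket f g = amul f g - amul g f.
Proof. by []. Qed.
Lemma br_islinl g : islin (fun f => bracket f g).
Proof. by move=> c f f'; rewrite !bracketE amulDl amulZl amulDr amulZr; pw; ring. Qed.
Lemma br_islinr f : islin (bracket f).
Proof. by move=> c f' f''; rewrite !bracketE amulDl amulZl amulDr amulZr; pw; ring. Qed.
Lemma brC f g : bracket g f = - bracket f g.
Proof. by rewrite !bracketE; pw; ring. Qed.
Lemma jacobi f g h :
  bracket f (bracket g h) = bracket (bracket f g) h + bracket g (bracket f h).
Proof. by rewrite !bracketE !amulBl !amulBr !amulA; pw; ring. Qed.

Lemma tens_islinr f : islin (tens f).
Proof. by move=> c g g'; rewrite /tens; pw; ring. Qed.
Lemma tens_islinl g : islin (fun f => tens f g).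
Proof. by move=> c f f'; rewrite /tens; pw; ring. Qed.

Definition lin {T : Type} (G : word -> T -> R) (s : seq (R * word)) : T -> R :=
  \sum_(p <- s) sc p.1 (G p.2).

Definition lmul (s t : seq (R * word)) : seq (R * word) :=
  [seq (p.1 * q.1, p.2 ++ q.2) | p <- s, q <- t].
Definition lneg (s : seq (R * word)) := [seq (- p.1, p.2) | p <- s].
Definition lscale c (s : seq (R * word)) := [seq (c * p.1, p.2) | p <- s].

Section LinL.
Context {T : Type}.
Implicit Types (G H : word -> T -> R) (s t : seq (R * word)).
Lemma lin_nil G : lin G [::] = 0. Proof. by rewrite /lin big_nil. Qed.
Lemma lin_cons G p s : lin G (p :: s) = sc p.1 (G p.2) + lin G s.
Proof. by rewrite /lin big_cons. Qed.
Lemma lin_cat G s t : lin G (s ++ t) = lin G s + lin G t.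
Proof. by rewrite /lin big_cat. Qed.
Lemma lin_lneg G s : lin G (lneg s) = - lin G s.
Proof. by rewrite /lin big_map -sumrN; apply: eq_bigr => p _; rewrite scNl. Qed.
Lemma lin_lscale G c s : lin G (lscale c s) = sc c (lin G s).
Proof.
rewrite /lin big_map (lin_sum (sc_islin c)); apply: eq_bigr => p _.
by rewrite scA.
Qed.
Lemma lin_comp {T' : Type} (h : (T -> R) -> (T' -> R)) (hl : islin h) G s :
  lin (fun w => h (G w)) s = h (lin G s).
Proof. by rewrite /lin (lin_sum hl); apply: eq_bigr => p _; rewrite (linZ hl). Qed.
Lemma lin_eq G H s : (forall p, p \in s -> G p.2 = H p.2) -> lin G s = lin H s.
Proof. by move=> e; rewrite /lin big_seq_cond [RHS]big_seq_cond; apply: eq_bigr => p /andP[ps _]; rewrite e. Qed.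
Lemma lin_add G H s : lin (fun w => G w + H w) s = lin G s + lin H s.
Proof. by rewrite /lin -big_split; apply: eq_bigr => p _; rewrite (linD (sc_islin _)). Qed.
Lemma lin_opp G s : lin (fun w => - G w) s = - lin G s.
Proof. by rewrite /lin -sumrN; apply: eq_bigr => p _; rewrite (linN (sc_islin _)). Qed.
Lemma lin_sub G H s : lin (fun w => G w - H w) s = lin G s - lin H s.
Proof. by rewrite lin_add lin_opp. Qed.
Lemma lin_scale c G s : lin (fun w => sc c (G w)) s = sc c (lin G s).
Proof. by rewrite (lin_comp (sc_islin c)). Qed.
Lemma lin_zero s : lin (fun _ => (0 : T -> R)) s = 0.
Proof. by rewrite /lin big1 // => p _; rewrite (lin0 (sc_islin _)). Qed.
Lemma lin_sumf (I : Type) (r : seq I) (F : I -> word -> T -> R) s :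
  lin (fun w => \sum_(i <- r) F i w) s = \sum_(i <- r) lin (F i) s.
Proof.
rewrite /lin exchange_big /=; apply: eq_bigr => p _.
by rewrite (lin_sum (sc_islin _)).
Qed.
Lemma lin_lmul G s t :
  lin G (lmul s t) = \sum_(p <- s) sc p.1 (lin (fun v => G (p.2 ++ v)) t).
Proof.
rewrite /lin /lmul big_allpairs_dep /=; apply: eq_bigr => p _.
rewrite (lin_sum (sc_islin _)); apply: eq_bigr => q _.
by rewrite scA.
Qed.
End LinL.

Definition delta (u : word) : word -> R := fun w => (w == u)%:R.
Definition ev (s : seq (R * word)) : word -> R := lin delta s.

Lemma amul_delta u v : amul (delta u) (delta v) = delta (u ++ v).
Proof.
apply/funext => w; rewrite /amul /delta.
have E : forall i : 'I_(size w).+1,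
    (take i w == u)%:R * (drop i w == v)%:R =
    ((i == size u :> nat) && (w == u ++ v))%:R :> R.
  move=> i; rewrite -natrM mulnb; congr ((nat_of_bool _)%:R).
  move: (nat_of_ord i) (ltn_ord i) => k kw; apply/idP/idP.
    move=> /andP[/eqP tu /eqP dv].
    have wuv : u ++ v = w by rewrite -tu -dv cat_take_drop.
    apply/andP; split; last by rewrite wuv.
    by rewrite -tu size_takel // -ltnS.
  move=> /andP[/eqP iu /eqP wuv]; rewrite wuv iu take_size_cat // drop_size_cat //.
  by rewrite !eqxx.
rewrite (eq_bigr _ (fun i _ => E i)).
case: (boolP (w == u ++ v)) => [/eqP wuv|nw].
  have hu : (size u < (size w).+1)%N by rewrite wuv size_cat ltnS leq_addr.
  rewrite (bigD1 (Ordinal hu)) //= eqxx /= big1 ?addr0 // => i /negbTE ne.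
  by rewrite -val_eqE /= in ne; rewrite ne.
by rewrite big1 // => i _; rewrite andbF.
Qed.
End S.
Ltac pw := let x := fresh "x" in apply/funext => x; rewrite /sc ?fE /=.
Inductive tree := Lf of bool | Nd of tree & tree.
Fixpoint deg (t : tree) : nat := match t with Lf _ => 1 | Nd a b => deg a + deg b end.
Lemma deg_gt0 t : (0 < deg t)%N.
Proof. by elim: t => //= a IHa b _; rewrite addn_gt0 IHa. Qed.

Section S2.
Variable R : realType.
Implicit Types f g h : word -> R.
Implicit Types s : seq (R * word).
Local Notation delta := (@delta R).

Lemma lin_amull (G : word -> word -> R) s g : lin (fun w => amul (G w) g) s = amul (lin G s) g.
Proof. exact: (lin_comp (amul_islinl g) G s). Qed.
Lemma lin_amulr (G : word -> word -> R) s g : lin (fun w => amul g (G w)) s = amul g (lin G s).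
Proof. exact: (lin_comp (amul_islinr g) G s). Qed.
Lemma lin_brl (G : word -> word -> R) s g : lin (fun w => bracket (G w) g) s = bracket (lin G s) g.
Proof. exact: (lin_comp (br_islinl g) G s). Qed.
Lemma lin_brr (G : word -> word -> R) s g : lin (fun w => bracket g (G w)) s = bracket g (lin G s).
Proof. exact: (lin_comp (br_islinr g) G s). Qed.
Lemma lin_tensl (G : word -> word -> R) s g : lin (fun w => tens (G w) g) s = tens (lin G s) g.
Proof. exact: (lin_comp (tens_islinl g) G s). Qed.
Lemma lin_tensr (G : word -> word -> R) s g : lin (fun w => tens g (G w)) s = tens g (lin G s).
Proof. exact: (lin_comp (tens_islinr g) G s). Qed.

Lemma amul_ev s t : amul (ev s) (ev t) = ev (lmul s t).
Proof.
rewrite /ev lin_lmul -lin_amull /lin; apply: eq_bigr => p _; congr (sc _ _).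
rewrite -lin_amulr; apply: eq_bigr => q _; by rewrite amul_delta.
Qed.

Fixpoint tl (t : tree) : seq (R * word) :=
  match t with
  | Lf b => [:: (1, [:: b])]
  | Nd a b => lmul (tl a) (tl b) ++ lneg (lmul (tl b) (tl a))
  end.
Fixpoint tv (t : tree) : word -> R :=
  match t with
  | Lf b => delta [:: b]
  | Nd a b => bracket (tv a) (tv b)
  end.

Lemma tvE t : tv t = ev (tl t).
Proof.
elim: t => [b|a IHa b IHb] /=.
  by rewrite /ev lin_cons lin_nil addr0 sc1.
by rewrite bracketE IHa IHb !amul_ev /ev lin_cat lin_lneg.
Qed.

Lemma tl_size t p : p \in tl t -> size p.2 = deg t.
Proof.
elim: t p => [b|a IHa b IHb] p /=; first by rewrite inE => /eqP ->.
rewrite mem_cat /lneg /lmul => /orP[|/mapP[q]].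
  by case/allpairsP => -[p1 q1] [/= /IHa h1 /IHb h2 ->]; rewrite size_cat h1 h2.
case/allpairsP => -[p1 q1] [/= /IHb h1 /IHa h2 ->] ->.
by rewrite /= size_cat h1 h2 addnC.
Qed.

Lemma letterE b : letter R b = delta [:: b].
Proof. by apply/funext => w; rewrite /letter /delta; case: eqP. Qed.

Lemma inL0 : inL (0 : word -> R).
Proof. by move=> S [] . Qed.
Lemma inLD f g : inL f -> inL g -> inL (f + g).
Proof. move=> hf hg S hS hX hY; have [_ hD _ _] := hS; exact: (hD f g (hf S hS hX hY) (hg S hS hX hY)). Qed.
Lemma inLZ c f : inL f -> inL (sc c f).
Proof. move=> hf S hS hX hY; have [_ _ hZ _] := hS; exact: (hZ c f (hf S hS hX hY)). Qed.
Lemma inLB f g : inL f -> inL g -> inL (bracket f g).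
Proof. move=> hf hg S hS hX hY; have [_ _ _ hB] := hS; exact: (hB f g (hf S hS hX hY) (hg S hS hX hY)). Qed.
Lemma inLN f : inL f -> inL (- f).
Proof. by move=> hf; rewrite -scN1; apply: inLZ. Qed.
Lemma inL_letter b : inL (delta [:: b] : word -> R).
Proof. by rewrite -letterE; case: b => S _ hX hY; [exact: hY|exact: hX]. Qed.
Lemma inL_tv t : inL (tv t).
Proof. by elim: t => [b|a IHa b IHb] /=; [apply: inL_letter|apply: inLB]. Qed.
Lemma inL_sum (I : Type) (r : seq I) (F : I -> word -> R) :
  (forall i, inL (F i)) -> inL (\sum_(i <- r) F i).
Proof.
move=> h; elim: r => [|i r IH]; first by rewrite big_nil; apply: inL0.
by rewrite big_cons; apply: inLD.
Qed.

Definition tcomb (s : seq (R * tree)) : word -> R := \sum_(p <- s) sc p.1 (tv p.2).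

Lemma inL_trees f : inL f -> exists s : seq (R * tree), f = tcomb s.
Proof.
move=> hf; apply: (hf (fun f => exists s : seq (R * tree), f = tcomb s)); last 2 first.
- by exists [:: (1, Lf false)]; rewrite /tcomb big_cons big_nil addr0 sc1 /= /X letterE.
- by exists [:: (1, Lf true)]; rewrite /tcomb big_cons big_nil addr0 sc1 /= /Y letterE.
split.
- by exists [::]; rewrite /tcomb big_nil.
- by move=> f1 f2 [s1 ->] [s2 ->]; exists (s1 ++ s2); rewrite /tcomb big_cat.
- move=> c f1 [s1 ->]; exists [seq (c * p.1, p.2) | p <- s1].
  rewrite /tcomb big_map; rewrite -[ascale c _]/(sc c _) (lin_sum (sc_islin c)).
  by apply: eq_bigr => p _; rewrite scA.
- move=> f1 f2 [s1 ->] [s2 ->].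
  exists [seq (p.1 * q.1, Nd p.2 q.2) | p <- s1, q <- s2].
  rewrite /tcomb big_allpairs_dep /= (lin_sum (br_islinl _)); apply: eq_bigr => p _.
  rewrite (linZ (br_islinl _)) (lin_sum (br_islinr _)) (lin_sum (sc_islin _)).
  by apply: eq_bigr => q _; rewrite (linZ (br_islinr _)) scA mulrC.
Qed.
End S2.
Section S3.
Variable R : realType.
Implicit Types f g h : word -> R.
Implicit Types s : seq (R * word).
Local Notation delta := (@delta R).
Local Notation tl := (@tl R).
Local Notation tv := (@tv R).

Definition Q (t : word * word -> R) := lspan (@FL_rel R) t.

Lemma Q0 : Q 0.
Proof. by exists 0%N, (fun _ => 0), (fun _ => 0); split => // t; rewrite big_ord0. Qed.

Lemma QD x y : Q x -> Q y -> Q (x + y).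
Proof.
move=> [m1 [c1 [g1 [h1 e1]]]] [m2 [c2 [g2 [h2 e2]]]].
exists (m1 + m2)%N, (fun i => if (i < m1)%N then c1 i else c2 (i - m1)%N),
  (fun i => if (i < m1)%N then g1 i else g2 (i - m1)%N); split.
  move=> i lt; case: ifP => [/h1 //|/negbT]; rewrite -leqNgt => le; apply: h2.
  by rewrite ltn_subLR.
move=> t; rewrite addfE e1 e2 big_split_ord /=; congr (_ + _).
  by apply: eq_bigr => i _; rewrite /= ltn_ord.
by apply: eq_bigr => i _; rewrite /= ltnNge leq_addr /= addKn.
Qed.

Lemma QZ c x : Q x -> Q (sc c x).
Proof.
move=> [m [c1 [g1 [h1 e1]]]]; exists m, (fun i => c * c1 i), g1; split => // t.
by rewrite /sc /= e1 big_distrr; apply: eq_bigr => i _; exact: mulrA.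
Qed.
Lemma QN x : Q x -> Q (- x).
Proof. by move=> h; rewrite -scN1; apply: QZ. Qed.
Lemma QB x y : Q x -> Q y -> Q (x - y).
Proof. by move=> hx hy; apply: QD => //; apply: QN. Qed.
Lemma Q_sum (I : eqType) (r : seq I) (F : I -> word * word -> R) :
  (forall i, i \in r -> Q (F i)) -> Q (\sum_(i <- r) F i).
Proof.
elim: r => [|i r IH] h; first by rewrite big_nil; apply: Q0.
rewrite big_cons; apply: QD; first by apply: h; rewrite inE eqxx.
by apply: IH => j jr; apply: h; rewrite inE jr orbT.
Qed.

Lemma Qrel1 f g : inL f -> inL g -> Q (tens f g - tens g f).
Proof.
move=> hf hg; exists 1%N, (fun _ => 1), (fun _ => tens f g - tens g f); split.
  by move=> i _; left; exists f, g.
by move=> t; rewrite big_ord1 mul1r.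
Qed.
Lemma Qrel2 f g h : inL f -> inL g -> inL h ->
  Q (tens f (bracket g h) - tens (bracket f g) h).
Proof.
move=> hf hg hh; exists 1%N, (fun _ => 1),
  (fun _ => tens f (bracket g h) - tens (bracket f g) h); split.
  by move=> i _; right; exists f, g, h.
by move=> t; rewrite big_ord1 mul1r.
Qed.

Definition eqQ x y := Q (x - y).
Lemma eqQ_refl x : eqQ x x. Proof. by rewrite /eqQ subrr; apply: Q0. Qed.
Lemma eqQ_sym x y : eqQ x y -> eqQ y x.
Proof. by move=> h; rewrite /eqQ -opprB; apply: QN. Qed.
Lemma eqQ_trans x y z : eqQ x y -> eqQ y z -> eqQ x z.
Proof.
rewrite /eqQ => h1 h2; have -> : x - z = (x - y) + (y - z) by rewrite addrA subrK.
by apply: QD.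
Qed.
Lemma eqQ_add x y x' y' : eqQ x y -> eqQ x' y' -> eqQ (x + x') (y + y').
Proof.
rewrite /eqQ => h1 h2; have -> : (x + x') - (y + y') = (x - y) + (x' - y').
  by rewrite opprD addrACA.
by apply: QD.
Qed.
Lemma eqQ_sub x y x' y' : eqQ x y -> eqQ x' y' -> eqQ (x - x') (y - y').
Proof.
move=> h1 h2; apply: eqQ_add => //; rewrite /eqQ -opprD; exact: QN.
Qed.
Lemma eqQ_sc c x y : eqQ x y -> eqQ (sc c x) (sc c y).
Proof.
move=> h; rewrite /eqQ -(linB (sc_islin c)); by apply: QZ.
Qed.
Lemma eqQ_eq x y : x = y -> eqQ x y.
Proof. by move=> ->; apply: eqQ_refl. Qed.
Lemma eqQ_sum (I : eqType) (r : seq I) (F G : I -> word * word -> R) :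
  (forall i, i \in r -> eqQ (F i) (G i)) ->
  eqQ (\sum_(i <- r) F i) (\sum_(i <- r) G i).
Proof. by move=> h; rewrite /eqQ -sumrB; apply: Q_sum. Qed.
Lemma eqQ_lin (G H : word -> word * word -> R) s :
  (forall p, p \in s -> eqQ (G p.2) (H p.2)) -> eqQ (lin G s) (lin H s).
Proof. by move=> h; apply: eqQ_sum => p ps; apply: eqQ_sc; apply: h. Qed.
Lemma eqQ_symm f g : inL f -> inL g -> eqQ (tens f g) (tens g f).
Proof. exact: Qrel1. Qed.
Lemma eqQ_inv f g h : inL f -> inL g -> inL h ->
  eqQ (tens f (bracket g h)) (tens (bracket f g) h).
Proof. exact: Qrel2. Qed.

Definition adw (u : word) (z : word -> R) :=
  foldr (fun b z => bracket (delta [:: b]) z) z u.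
Definition radw (u : word) (y : word -> R) :=
  foldl (fun y b => bracket y (delta [:: b])) y u.
Fixpoint ell (w : word) : word -> R :=
  match w with
  | [::] => 0
  | b :: w' => if w' is [::] then delta [:: b] else bracket (delta [:: b]) (ell w')
  end.
Definition rr (w : word) : word -> R :=
  match w with [::] => 0 | b :: w' => radw w' (delta [:: b]) end.

Lemma ad_cat u v z : adw (u ++ v) z = adw u (adw v z).
Proof. by rewrite /adw foldr_cat. Qed.
Lemma rad_cat u v y : radw (u ++ v) y = radw v (radw u y).
Proof. by rewrite /radw foldl_cat. Qed.
Lemma ad_islin u : islin (adw u).
Proof.
elim: u => [|b u IH] c f f' //=.
by rewrite -/(adw u) IH (br_islinr _).
Qed.
Lemma rad_islin u : islin (radw u).
Proof.
elim: u => [|b u IH] c f f' //=.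
by rewrite -/(radw u _) (br_islinl _) IH.
Qed.
Lemma ell_cat u v : v != [::] -> ell (u ++ v) = adw u (ell v).
Proof.
move=> nv; elim: u => [|b u IH] //=.
have ne : u ++ v != [::].
  by case: (u) {IH} => [|c u'].
by case E: (u ++ v) ne => [|b' w] // _; rewrite -E IH.
Qed.
Lemma rr_cat u v : u != [::] -> rr (u ++ v) = radw v (rr u).
Proof. by case: u => [//|b u] _ /=; rewrite rad_cat. Qed.

Lemma inL_ad u z : inL z -> inL (adw u z).
Proof. by elim: u => [|b u IH] //= hz; apply: inLB; [apply: inL_letter|apply: IH]. Qed.
Lemma inL_rad u y : inL y -> inL (radw u y).
Proof.
elim: u y => [|b u IH] y //= hy; apply: IH; apply: inLB => //; apply: inL_letter.
Qed.
Lemma inL_ell w : inL (ell w).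
Proof.
elim: w => [|b w IH] /=; first by apply: inL0.
by case: w IH => [|b' w] IH; [apply: inL_letter|apply: inLB => //; apply: inL_letter].
Qed.
Lemma inL_rr w : inL (rr w).
Proof. by case: w => [|b w] /=; [apply: inL0|apply: inL_rad; apply: inL_letter]. Qed.

Lemma lin_ext {T : Type} (G H : word -> T -> R) s :
  (forall w, G w = H w) -> lin G s = lin H s.
Proof. by move=> e; rewrite /lin; apply: eq_bigr => p _; rewrite e. Qed.
Lemma lin_lmul2 {T : Type} (G : word -> T -> R) s t :
  lin G (lmul s t) = lin (fun u => lin (fun v => G (u ++ v)) t) s.
Proof. exact: lin_lmul. Qed.
Lemma lin_tlN {T : Type} (G : word -> T -> R) a b :
  lin G (tl (Nd a b)) = lin (fun u => lin (fun v => G (u ++ v)) (tl b)) (tl a)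
                       - lin (fun u => lin (fun v => G (u ++ v)) (tl a)) (tl b).
Proof. by rewrite /= lin_cat lin_lneg !lin_lmul2. Qed.
Lemma lin_tlL {T : Type} (G : word -> T -> R) b : lin G (tl (Lf b)) = G [:: b].
Proof. by rewrite /= lin_cons lin_nil addr0 sc1. Qed.


Lemma F3 t z : lin (fun u => adw u z) (tl t) = bracket (tv t) z.
Proof.
elim: t z => [b|a IHa b IHb] z; first by rewrite lin_tlL.
rewrite lin_tlN.
rewrite (@lin_ext _ _ (fun u => adw u (bracket (tv b) z))); last first.
  by move=> u; rewrite -IHb -(lin_comp (ad_islin u)); apply: lin_ext => v; rewrite ad_cat.
rewrite (@lin_ext _ (fun u => lin _ (tl a)) (fun u => adw u (bracket (tv a) z))); last first.
  by move=> u; rewrite -IHa -(lin_comp (ad_islin u)); apply: lin_ext => v; rewrite ad_cat.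
by rewrite IHa IHb /= jacobi addrK.
Qed.

Lemma F3' t y : lin (fun v => radw v y) (tl t) = bracket y (tv t).
Proof.
elim: t y => [b|a IHa b IHb] y; first by rewrite lin_tlL.
rewrite lin_tlN.
rewrite (@lin_ext _ _ (fun u => bracket (radw u y) (tv b))); last first.
  by move=> u; rewrite -IHb; apply: lin_ext => v; rewrite rad_cat.
rewrite (@lin_ext _ (fun u => lin _ (tl a)) (fun u => bracket (radw u y) (tv a))); last first.
  by move=> u; rewrite -IHa; apply: lin_ext => v; rewrite rad_cat.
by rewrite lin_brl lin_brl IHa IHb /= jacobi [bracket (tv a) (bracket y (tv b))]brC.
Qed.
End S3.
Section S4.
Variable R : realType.
Implicit Types f g h : word -> R.
Implicit Types s : seq (R * word).
Local Notation delta := (@delta R).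
Local Notation tl := (@tl R).
Local Notation tv := (@tv R).
Local Notation ell := (@ell R).
Local Notation rr := (@rr R).

Lemma tl_ne t p : p \in tl t -> p.2 != [::].
Proof. by move=> /tl_size h; rewrite -size_eq0 h -lt0n deg_gt0. Qed.

Lemma ad0 u : adw u (0 : word -> R) = 0. Proof. exact: (lin0 (ad_islin u)). Qed.
Lemma rad0 u : radw u (0 : word -> R) = 0. Proof. exact: (lin0 (rad_islin u)). Qed.

Lemma lin_ad u (G : word -> word -> R) s : lin (fun w => adw u (G w)) s = adw u (lin G s).
Proof. exact: (lin_comp (ad_islin u) G s). Qed.

Lemma F1 t : lin ell (tl t) = sc (deg t)%:R (tv t).
Proof.
elim: t => [b|a IHa b IHb]; first by rewrite lin_tlL /= sc1.
rewrite lin_tlN.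
rewrite (@lin_ext _ _ _ (fun u => adw u (sc (deg b)%:R (tv b)))); last first.
  move=> u; rewrite -IHb -lin_ad; apply: lin_eq => p /tl_ne pn.
  by rewrite ell_cat.
rewrite (@lin_ext _ _ (fun u => lin _ (tl a)) (fun u => adw u (sc (deg a)%:R (tv a)))); last first.
  move=> u; rewrite -IHa -lin_ad; apply: lin_eq => p /tl_ne pn.
  by rewrite ell_cat.
rewrite !F3 /= (linZ (br_islinr _)) (linZ (br_islinr _)) [bracket (tv b) (tv a)]brC.
by pw; rewrite natrD; ring.
Qed.

Lemma F2 t : lin rr (tl t) = sc (deg t)%:R (tv t).
Proof.
elim: t => [b|a IHa b IHb]; first by rewrite lin_tlL /= sc1.
rewrite lin_tlN.
rewrite (@lin_eq _ _ _ (fun u => bracket (rr u) (tv b))); last first.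
  move=> p /tl_ne pn; rewrite -F3'; apply: lin_ext => v.
  by rewrite rr_cat.
rewrite (@lin_eq _ _ (fun u => lin _ (tl a)) (fun u => bracket (rr u) (tv a))); last first.
  move=> p /tl_ne pn; rewrite -F3'; apply: lin_ext => v.
  by rewrite rr_cat.
rewrite !lin_brl IHa IHb /= (linZ (br_islinl _)) (linZ (br_islinl _)) [bracket (tv b) (tv a)]brC.
by pw; rewrite natrD; ring.
Qed.

Definition Ssum {T : Type} (beta : (word -> R) -> (word -> R) -> T -> R) (w : word) : T -> R :=
  \sum_(0 <= k < (size w).+1) beta (ell (take k w)) (rr (drop k w)).

Lemma take_ne j (v : word) : v != [::] -> take j.+1 v != [::].
Proof. by case: v. Qed.

Lemma Ssplit {T : Type} (beta : (word -> R) -> (word -> R) -> T -> R)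
  (b0l : forall y, beta 0 y = 0) (b0r : forall x, beta x 0 = 0) u v :
  u != [::] -> v != [::] ->
  Ssum beta (u ++ v) =
    \sum_(0 <= k < (size u).+1) beta (ell (take k u)) (radw v (rr (drop k u)))
  + beta (ell u) (rr v)
  + \sum_(0 <= j < (size v).+1) beta (adw u (ell (take j v))) (rr (drop j v)).
Proof.
move=> nu nv; rewrite /Ssum size_cat.
have le1 : (size u <= (size u + size v).+1)%N by rewrite ltnW // ltnS leq_addr.
rewrite (big_cat_nat (leq0n _) le1) /=.
rewrite [X in _ = X + _ + _]big_nat_recr //= take_size drop_size /= rad0 b0r addr0.
rewrite -addrA; congr (_ + _).
  apply: eq_big_nat => k /andP[_ ku].
  rewrite take_cat ku drop_cat ku rr_cat //.
  by rewrite -size_eq0 size_drop subn_eq0 -ltnNge.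
rewrite -addnS -{1}[size u]add0n big_addn addKn.
rewrite big_nat_recl // [X in _ = _ + X]big_nat_recl //= take0 /= ad0 b0l add0r.
rewrite add0n take_size_cat // drop_size_cat //.
congr (_ + _); apply: eq_big_nat => j _.
rewrite take_cat ltnNge leq_addl /= addnK drop_cat ltnNge leq_addl /= addnK.
by rewrite ell_cat // take_ne.
Qed.

Lemma lin_swap {T : Type} (G : word -> word -> T -> R) s t :
  lin (fun u => lin (fun v => G u v) t) s = lin (fun v => lin (fun u => G u v) s) t.
Proof.
rewrite /lin.
under eq_bigr => p _ do rewrite (lin_sum (sc_islin _)).
rewrite exchange_big /=; apply: eq_bigr => q _.
rewrite (lin_sum (sc_islin _)); apply: eq_bigr => p _.
by rewrite !scA mulrC.
Qed.

Lemma Pdec {T : Type} (beta : (word -> R) -> (word -> R) -> T -> R)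
  (bl : forall y, islin (fun x => beta x y)) (br : forall x, islin (beta x)) a b :
  lin (Ssum beta) (lmul (tl a) (tl b)) =
    lin (fun u => \sum_(0 <= k < (size u).+1)
                    beta (ell (take k u)) (bracket (rr (drop k u)) (tv b))) (tl a)
  + beta (lin ell (tl a)) (lin rr (tl b))
  + lin (fun v => \sum_(0 <= j < (size v).+1)
                    beta (bracket (tv a) (ell (take j v))) (rr (drop j v))) (tl b).
Proof.
have b0l : forall y, beta 0 y = 0 by move=> y; apply: (lin0 (bl y)).
have b0r : forall x, beta x 0 = 0 by move=> x; apply: (lin0 (br x)).
rewrite lin_lmul2.
rewrite (@lin_eq _ _ _ (fun u => lin (fun v =>
   \sum_(0 <= k < (size u).+1) beta (ell (take k u)) (radw v (rr (drop k u)))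
 + beta (ell u) (rr v)
 + \sum_(0 <= j < (size v).+1) beta (adw u (ell (take j v))) (rr (drop j v))) (tl b)));
  last first.
  by move=> p /tl_ne pn; apply: lin_eq => q /tl_ne qn; rewrite Ssplit.
rewrite (@lin_ext _ _ _ (fun u =>
    \sum_(0 <= k < (size u).+1) beta (ell (take k u)) (bracket (rr (drop k u)) (tv b))
  + beta (ell u) (lin rr (tl b))
  + lin (fun v => \sum_(0 <= j < (size v).+1) beta (adw u (ell (take j v))) (rr (drop j v))) (tl b)));
  last first.
  move=> u; rewrite !lin_add; congr (_ + _ + _).
    rewrite lin_sumf; apply: eq_bigr => k _.
    by rewrite (lin_comp (br _)) F3'.
  by rewrite (lin_comp (br _)).
rewrite !lin_add; congr (_ + _ + _).
  by rewrite (lin_comp (bl _)).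
rewrite lin_swap; apply: lin_ext => v.
rewrite lin_sumf; apply: eq_bigr => j _.
by rewrite (lin_comp (bl _)) F3.
Qed.

Lemma J1 (l r B : word -> R) : bracket l (bracket r B) - bracket (bracket B l) r = bracket (bracket l r) B.
Proof. by rewrite !bracketE !amulBl !amulBr !amulA; pw; ring. Qed.
Lemma J2 (A l r : word -> R) : bracket (bracket A l) r - bracket l (bracket r A) = bracket A (bracket l r).
Proof. by rewrite !bracketE !amulBl !amulBr !amulA; pw; ring. Qed.

Lemma natid p q : (0 < p)%N -> (0 < q)%N ->
  ((p + q) * (p + q).-1 = p * p.-1 + (q * q.-1 + 2 * (p * q)))%N.
Proof.
case: p => // p; case: q => // q _ _.
rewrite addSn /=; ring.
Qed.

Lemma rearr (x1 x2 x3 y1 y2 y3 : word -> R) :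
  (x1 + x2 + x3) - (y1 + y2 + y3) = (x1 - y3) + (x2 - y2) + (x3 - y1).
Proof. by pw; ring. Qed.

Lemma br0l (y : word -> R) : bracket 0 y = 0. Proof. exact: (lin0 (br_islinl y)). Qed.
Lemma br0r (x : word -> R) : bracket x 0 = 0. Proof. exact: (lin0 (br_islinr x)). Qed.

Lemma comb1 a b :
  lin (fun u => \sum_(0 <= k < (size u).+1)
          bracket (ell (take k u)) (bracket (rr (drop k u)) (tv b))) (tl a)
  - lin (fun u => \sum_(0 <= k < (size u).+1)
          bracket (bracket (tv b) (ell (take k u))) (rr (drop k u))) (tl a)
  = bracket (lin (Ssum (@bracket R)) (tl a)) (tv b).
Proof.
rewrite -lin_sub -lin_brl; apply: lin_ext => u.
rewrite -sumrB /Ssum (lin_sum (br_islinl _)); apply: eq_bigr => k _.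
by rewrite J1.
Qed.

Lemma comb3 a b :
  lin (fun v => \sum_(0 <= j < (size v).+1)
          bracket (bracket (tv a) (ell (take j v))) (rr (drop j v))) (tl b)
  - lin (fun v => \sum_(0 <= j < (size v).+1)
          bracket (ell (take j v)) (bracket (rr (drop j v)) (tv a))) (tl b)
  = bracket (tv a) (lin (Ssum (@bracket R)) (tl b)).
Proof.
rewrite -lin_sub -lin_brr; apply: lin_ext => u.
rewrite -sumrB /Ssum (lin_sum (br_islinr _)); apply: eq_bigr => k _.
by rewrite J2.
Qed.

Lemma F4 t : lin (Ssum (@bracket R)) (tl t) = sc (deg t * (deg t).-1)%:R (tv t).
Proof.
elim: t => [b|a IHa b IHb].
  rewrite lin_tlL /Ssum big_mkord big_ord_recr big_ord1 /= br0l br0r addr0.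
  by rewrite sc0.
rewrite [tl _]/= lin_cat lin_lneg !(Pdec (@br_islinl R) (@br_islinr R)) rearr comb1 comb3.
rewrite IHa IHb !F1 !F2 /= natid ?deg_gt0 //.
rewrite !(linZ (br_islinl _)) !(linZ (br_islinr _)) [bracket (tv b) (tv a)]brC.
by pw; rewrite !natrD !natrM; ring.
Qed.
End S4.
Section S5.
Variable R : realType.
Implicit Types f g h : word -> R.
Implicit Types s : seq (R * word).
Local Notation delta := (@delta R).
Local Notation tl := (@tl R).
Local Notation tv := (@tv R).
Local Notation ell := (@ell R).
Local Notation rr := (@rr R).
Local Notation eqQ := (@eqQ R).

Lemma Inv u y z : inL y -> inL z -> eqQ (tens y (adw u z)) (tens (radw u y) z).
Proof.
elim: u y => [|c u IH] y hy hz; first by apply: eqQ_refl.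
have e1 : adw (c :: u) z = bracket (delta [:: c]) (adw u z) by [].
have e2 : radw (c :: u) y = radw u (bracket y (delta [:: c])) by [].
rewrite e1 e2; apply: eqQ_trans (eqQ_inv hy (inL_letter c) (inL_ad u hz)) _.
by apply: IH => //; apply: inLB => //; apply: inL_letter.
Qed.

Definition G0 (w : word) : word * word -> R := tens (delta [:: head false w]) (ell (behead w)).
Definition psi (w : word) : word * word -> R := \sum_(0 <= k < size w) G0 (rot k w).
Definition Psi (w : word) : word * word -> R :=
  sc ((size w * (size w).-1)%:R^-1) (psi w).

Lemma tens0l (y : word -> R) : tens 0 y = 0. Proof. exact: (lin0 (tens_islinl y)). Qed.
Lemma tens0r (x : word -> R) : tens x 0 = 0. Proof. exact: (lin0 (tens_islinr x)). Qed.

Lemma psi_phi w : w != [::] -> eqQ (psi w) (G0 w + Ssum (@tens R) w).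
Proof.
move=> nw; have n0 : (0 < size w)%N by rewrite lt0n size_eq0.
rewrite /psi /Ssum (big_ltn n0) rot0 (big_ltn (ltn0Sn _)) take0 /= tens0l add0r.
rewrite (big_nat_recr _ _ _ n0) /= take_size drop_size /= tens0r addr0.
apply: eqQ_add; first by apply: eqQ_refl.
apply: eqQ_sum => k; rewrite mem_index_iota => /andP[k1 kn].
rewrite /rot (drop_nth false kn) /G0 /= ell_cat; last first.
  by rewrite -size_eq0 size_takel ?(ltnW kn) // -lt0n.
apply: eqQ_trans (Inv (drop k.+1 w) (@inL_letter R (nth false w k)) (@inL_ell R (take k w))) _.
by apply: eqQ_symm; [apply: inL_rad; apply: inL_letter|apply: inL_ell].
Qed.

Lemma rotcat k (u v : word) : (k <= size u)%N -> rot k (u ++ v) = rot (size v + k) (v ++ u).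
Proof.
move=> ku.
have sk : size (take k u) = k by rewrite size_takel.
rewrite -[u](cat_take_drop k).
move: (take k u) (drop k u) sk => u1 u2 sk.
have e1 : rot k ((u1 ++ u2) ++ v) = (u2 ++ v) ++ u1 by rewrite -catA -{1}sk rot_size_cat.
have e2 : rot (size v + k) (v ++ (u1 ++ u2)) = u2 ++ (v ++ u1).
  by rewrite catA -sk -size_cat rot_size_cat.
by rewrite e1 e2 catA.
Qed.

Lemma big_shift (V : zmodType) m n (F : nat -> V) :
  \sum_(m <= k < m + n) F k = \sum_(0 <= j < n) F (j + m).
Proof. by rewrite -{1}[m]add0n big_addn addKn. Qed.

Lemma psi_rot u v : psi (u ++ v) = psi (v ++ u).
Proof.
rewrite /psi !size_cat.
rewrite (big_cat_nat (leq0n (size u)) (leq_addr (size v) (size u))) /=.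
rewrite [RHS](big_cat_nat (leq0n (size v)) (leq_addr (size u) (size v))) /=.
rewrite addrC (big_shift (size u) (size v)) (big_shift (size v) (size u)); congr (_ + _).
  apply: eq_big_nat => j /andP[_ jv].
  by rewrite (@rotcat j v u (ltnW jv)) addnC.
apply: eq_big_nat => k /andP[_ ku].
by rewrite (@rotcat k u v (ltnW ku)) addnC.
Qed.

Lemma Psi_rot u v : Psi (u ++ v) = Psi (v ++ u).
Proof. by rewrite /Psi psi_rot !size_cat addnC. Qed.

Lemma lmul_mem a b p : p \in lmul (tl a) (tl b) -> size p.2 = (deg a + deg b)%N.
Proof.
by case/allpairsP => -[p1 q1] [/= /tl_size h1 /tl_size h2 ->] /=; rewrite size_cat h1 h2.
Qed.
Lemma lmul_ne a b p : p \in lmul (tl a) (tl b) -> p.2 != [::].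
Proof.
move=> /lmul_mem h; rewrite -size_eq0 h -lt0n addn_gt0 deg_gt0 //.
Qed.

Lemma Key a b : eqQ (lin psi (lmul (tl a) (tl b)))
   (sc ((deg a + deg b) * (deg a + deg b).-1)%:R (tens (tv a) (tv b))).
Proof.
set L := lmul (tl a) (tl b).
have step1 : eqQ (lin psi L) (lin G0 L + lin (Ssum (@tens R)) L).
  rewrite -lin_add; apply: eqQ_lin => p pL; apply: psi_phi.
  exact: (lmul_ne pL).
apply: eqQ_trans step1 _.
have step2 : eqQ (lin G0 L) (tens (sc (deg a)%:R (tv a)) (sc (deg b)%:R (tv b))).
  rewrite /L lin_lmul2.
  rewrite (@lin_eq _ _ _ (fun u => tens (delta [:: head false u])
                        (adw (behead u) (sc (deg b)%:R (tv b))))); last first.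
    move=> p /tl_ne; case: p => c0 [|c u] //= _.
    rewrite -F1 -lin_ad -lin_tensr; apply: lin_eq => q /tl_ne qn.
    by rewrite /G0 /= ell_cat.
  apply: eqQ_trans (_ : eqQ _ (lin (fun u => tens (rr u) (sc (deg b)%:R (tv b))) (tl a))) _.
    apply: eqQ_lin => p /tl_ne; case: p => c0 [|c u] //= _.
    by apply: Inv; [apply: inL_letter | apply: inLZ; apply: inL_tv].
  by rewrite lin_tensl F2; apply: eqQ_refl.
have P1e : eqQ (lin (fun u => \sum_(0 <= k < (size u).+1)
            tens (ell (take k u)) (bracket (rr (drop k u)) (tv b))) (tl a))
           (tens (sc (deg a * (deg a).-1)%:R (tv a)) (tv b)).
  apply: eqQ_trans (_ : eqQ _ (lin (fun u => tens (Ssum (@bracket R) u) (tv b)) (tl a))) _.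
    apply: eqQ_lin => p _; rewrite /Ssum (lin_sum (tens_islinl _)); apply: eqQ_sum => k _.
    by apply: eqQ_inv; [apply: inL_ell | apply: inL_rr | apply: inL_tv].
  by rewrite lin_tensl F4; apply: eqQ_refl.
have P3e : eqQ (lin (fun v => \sum_(0 <= j < (size v).+1)
            tens (bracket (tv a) (ell (take j v))) (rr (drop j v))) (tl b))
           (tens (tv a) (sc (deg b * (deg b).-1)%:R (tv b))).
  apply: eqQ_trans (_ : eqQ _ (lin (fun v => tens (tv a) (Ssum (@bracket R) v)) (tl b))) _.
    apply: eqQ_lin => p _; rewrite /Ssum (lin_sum (tens_islinr _)); apply: eqQ_sum => k _.
    by apply: eqQ_sym; apply: eqQ_inv; [apply: inL_tv | apply: inL_ell | apply: inL_rr].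
  by rewrite lin_tensr F4; apply: eqQ_refl.
have step3 : eqQ (lin (Ssum (@tens R)) L)
   (tens (sc (deg a * (deg a).-1)%:R (tv a)) (tv b)
    + tens (sc (deg a)%:R (tv a)) (sc (deg b)%:R (tv b))
    + tens (tv a) (sc (deg b * (deg b).-1)%:R (tv b))).
  rewrite /L (Pdec (@tens_islinl R) (@tens_islinr R)) F1 F2.
  by apply: eqQ_add; [apply: eqQ_add; [exact: P1e | apply: eqQ_refl] | exact: P3e].
apply: eqQ_trans (eqQ_add step2 step3) _.
apply: eqQ_eq.
rewrite natid ?deg_gt0 //.
rewrite !(linZ (tens_islinl _)) !(linZ (tens_islinr _)).
by rewrite /tens; pw; rewrite !natrD !natrM; ring.
Qed.

Lemma KeyPsi a b : eqQ (lin Psi (lmul (tl a) (tl b))) (tens (tv a) (tv b)).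
Proof.
set N := (deg a + deg b)%N.
rewrite (@lin_eq _ _ _ (fun w => sc ((N * N.-1)%:R^-1) (psi w))); last first.
  by move=> p pL; rewrite /Psi (lmul_mem pL).
rewrite lin_scale.
have Nz : (N * N.-1)%:R != 0 :> R.
  have h1 := deg_gt0 a; have h2 := deg_gt0 b.
  rewrite pnatr_eq0 muln_eq0 negb_or /N; apply/andP; split.
    by rewrite -lt0n addn_gt0 h1.
  by rewrite -lt0n -ltnS prednK ?addn_gt0 ?h1 //; exact: (leq_add h1 h2).
apply: eqQ_trans (eqQ_sc _ (Key a b)) _.
by rewrite scA mulVf // sc1; apply: eqQ_refl.
Qed.
End S5.
Section S6.
Variable R : realType.
Implicit Types f g h : word -> R.
Implicit Types s : seq (R * word).
Local Notation delta := (@delta R).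
Local Notation tl := (@tl R).
Local Notation tv := (@tv R).
Local Notation eqQ := (@eqQ R).
Local Notation Psi := (@Psi R).

Definition Good f (H : word * word -> R) := exists L, ev L = f /\ eqQ H (lin Psi L).
Definition Zero f := exists L, ev L = f /\ lin Psi L = 0.

Lemma ev_cons p s x : ev (p :: s) x = p.1 * delta p.2 x + ev s x.
Proof. by rewrite /ev lin_cons. Qed.
Lemma ev_nil x : ev [::] x = 0 :> R.
Proof. by rewrite /ev lin_nil. Qed.

Lemma Good0 : Good 0 0.
Proof. by exists [::]; rewrite /ev !lin_nil; split => //; apply: eqQ_refl. Qed.
Lemma GoodD f g H K : Good f H -> Good g K -> Good (f + g) (H + K).
Proof.
move=> [L1 [e1 q1]] [L2 [e2 q2]]; exists (L1 ++ L2).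
by rewrite /ev !lin_cat -/(ev L1) -/(ev L2) e1 e2; split => //; apply: eqQ_add.
Qed.
Lemma GoodZ c f H : Good f H -> Good (sc c f) (sc c H).
Proof.
move=> [L [e q]]; exists (lscale c L).
by rewrite /ev !lin_lscale -/(ev L) e; split => //; apply: eqQ_sc.
Qed.
Lemma Good_big (I : Type) (r : seq I) (P : pred I) (F : I -> word -> R) (H : I -> word * word -> R) :
  (forall i, P i -> Good (F i) (H i)) ->
  Good (\sum_(i <- r | P i) F i) (\sum_(i <- r | P i) H i).
Proof.
move=> h; elim/big_rec2: _ => [|i y1 y2 Pi IH]; first exact: Good0.
by apply: GoodD => //; apply: h.
Qed.

Lemma Good_tree a b : Good (amul (tv a) (tv b)) (tens (tv a) (tv b)).
Proof.
exists (lmul (tl a) (tl b)); split; first by rewrite !tvE amul_ev.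
by apply: eqQ_sym; apply: KeyPsi.
Qed.

Lemma Good_comb (s1 s2 : seq (R * tree)) :
  Good (amul (tcomb s1) (tcomb s2)) (tens (tcomb s1) (tcomb s2)).
Proof.
rewrite /tcomb (lin_sum (amul_islinl _)) (lin_sum (tens_islinl _)).
apply: Good_big => p _; rewrite (linZ (amul_islinl _)) (linZ (tens_islinl _)).
apply: GoodZ; rewrite (lin_sum (amul_islinr _)) (lin_sum (tens_islinr _)).
apply: Good_big => q _; rewrite (linZ (amul_islinr _)) (linZ (tens_islinr _)).
by apply: GoodZ; apply: Good_tree.
Qed.

Lemma Good_L f g : inL f -> inL g -> Good (amul f g) (tens f g).
Proof.
by move=> /inL_trees [s1 ->] /inL_trees [s2 ->]; apply: Good_comb.
Qed.

Lemma Zero0 : Zero 0.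
Proof. by exists [::]; rewrite /ev !lin_nil. Qed.
Lemma ZeroD f g : Zero f -> Zero g -> Zero (f + g).
Proof.
move=> [L1 [e1 q1]] [L2 [e2 q2]]; exists (L1 ++ L2).
by rewrite /ev !lin_cat -/(ev L1) -/(ev L2) e1 e2 q1 q2 addr0.
Qed.
Lemma ZeroZ c f : Zero f -> Zero (sc c f).
Proof.
move=> [L [e q]]; exists (lscale c L).
by rewrite /ev !lin_lscale -/(ev L) e q (lin0 (sc_islin c)).
Qed.
Lemma Zero_big (I : Type) (r : seq I) (P : pred I) (F : I -> word -> R) :
  (forall i, P i -> Zero (F i)) -> Zero (\sum_(i <- r | P i) F i).
Proof.
move=> h; elim/big_rec: _ => [|i y Pi IH]; first exact: Zero0.
by apply: ZeroD => //; apply: h.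
Qed.

Lemma fin_ev f : fin_supp f -> exists s, f = ev s.
Proof.
move=> [sw hs]; exists [seq (f w, w) | w <- undup sw].
apply/funext => x; rewrite /ev /lin big_map sumfE /=.
have U := undup_uniq sw.
case: (boolP (x \in undup sw)) => xs.
  rewrite (bigD1_seq x xs U) /= /sc /delta eqxx mulr1 big1 ?addr0 // => w wx.
  by rewrite eq_sym (negbTE wx) mulr0.
rewrite big1_seq; first by rewrite hs // -mem_undup.
move=> w /andP[_ ws]; rewrite /sc /delta; case: eqP => [xw|]; last by rewrite mulr0.
by move: xs; rewrite xw ws.
Qed.

Lemma Zero_comm f g : fin_supp f -> fin_supp g -> Zero (amul f g - amul g f).
Proof.
move=> /fin_ev [s ->] /fin_ev [t ->].
exists (lmul s t ++ lneg (lmul t s)); split.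
  by rewrite !amul_ev /ev lin_cat lin_lneg.
rewrite lin_cat lin_lneg !lin_lmul2 [X in _ - X = _]lin_swap.
rewrite [X in X - _ = _](@lin_ext _ _ _ (fun u => lin (fun v => Psi (v ++ u)) t)).
  by rewrite subrr.
by move=> u; apply: lin_ext => v; rewrite Psi_rot.
Qed.

Lemma lin_repr {T : Type} (G : word -> T -> R) s (U : seq word) :
  uniq U -> (forall p, p \in s -> p.2 \in U) ->
  lin G s = \sum_(w <- U) sc (ev s w) (G w).
Proof.
move=> uU; elim: s => [|p s IH] hs.
  by rewrite lin_nil big1 // => w _; rewrite ev_nil sc0.
rewrite lin_cons IH; last by move=> q qs; apply: hs; rewrite inE qs orbT.
under [RHS]eq_bigr => w _ do rewrite ev_cons scDl -scA.
rewrite big_split /=; congr (_ + _).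
have pU : p.2 \in U by apply: hs; rewrite inE eqxx.
rewrite (bigD1_seq p.2 pU uU) /= /delta /= eqxx scA mulr1 big1 ?addr0 // => w wp.
by rewrite (negbTE wp) scA mulr0 sc0.
Qed.

Lemma lin_ev_eq {T : Type} (G : word -> T -> R) L1 L2 :
  ev L1 = ev L2 -> lin G L1 = lin G L2.
Proof.
move=> e; set U := undup (map snd (L1 ++ L2)).
have uU : uniq U by apply: undup_uniq.
rewrite (lin_repr G uU); last by move=> p pL; rewrite mem_undup map_f // mem_cat pL.
rewrite (lin_repr G uU); last by move=> p pL; rewrite mem_undup map_f // mem_cat pL orbT.
by rewrite e.
Qed.
End S6.

Theorem mainTheorem4 (R : realType) (n : nat) (a b : nat -> word -> R) :
  (forall i, (i < n)%N -> inL (a i) /\ inL (b i)) ->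
  lspan (@comm_gen R) (fun w => \sum_(i < n) amul (a i) (b i) w) ->
  lspan (@FL_rel R) (fun p => \sum_(i < n) tens (a i) (b i) p).
Proof.
move=> hab [m [c [g [hg eg]]]].
set F := \sum_(i < n) amul (a i) (b i).
set H := \sum_(i < n) tens (a i) (b i).
have GF : Good F H.
  apply: Good_big => i _; have [ha hb] := hab i (ltn_ord i).
  exact: Good_L.
have ZF : Zero F.
  have -> : F = \sum_(j < m) sc (c j) (g j).
    by apply/funext => w; rewrite /F !sumfE eg.
  apply: Zero_big => j _; apply: ZeroZ.
  have [f1 [f2 [h1 [h2 ->]]]] := hg j (ltn_ord j).
  exact: Zero_comm.
have [L1 [e1 q1]] := GF.
have [L2 [e2 q2]] := ZF.
have : lin (@Psi R) L1 = 0 by rewrite -q2; apply: lin_ev_eq; rewrite e1 e2.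
move=> z; rewrite z in q1.
have -> : (fun p => \sum_(i < n) tens (a i) (b i) p) = H by apply/funext => p; rewrite /H sumfE.
by move: q1; rewrite /eqQ subr0.
Qed.
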